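(* Let $C_n$ be the cycle on $n\ge 3$ vertices. (1) If $n$ is odd, then $\mathcal{Z}^{\mathrm{TE}}_-(C_n)\cong K_n$ and $\mathcal{Z}^{\mathrm{TS}}_-(C_n)\cong C_n$. (2) If $n$ is even, then $\mathcal{Z}^{\mathrm{TE}}_-(C_n)\cong K_{n/2}\,\square\,K_{n/2}$ and $\mathcal{Z}^{\mathrm{TS}}_-(C_n)\cong \frac{n^2}{4}K_1$ (the edgeless graph on $n^2/4$ vertices).
   Context: $\square$ denotes the Cartesian product. Skew forcing: vertices are colored blue or white; if any vertex $u$ (blue or white) has exactly one white neighbor $v$, then $u$ may force $v$ to become blue. A skew forcing set is a (possibly empty) set of initially blue vertices from which repeated application of this rule turns every vertex blue; $\mathrm{Z}_-(G)$ is the minimum size of a skew forcing set. $\mathcal{Z}^{\mathrm{TE}}_-(G)$ has as vertices the minimum skew forcing sets of $G$, with $S_1S_2$ an edge iff $S_1\setminus S_2=\{v_1\}$ and $S_2\setminus S_1=\{v_2\}$ for some vertices $v_1,v_2$; $\mathcal{Z}^{\mathrm{TS}}_-(G)$ has the same vertices with the additional requirement $v_1v_2\in E(G)$. *)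

(* Defs.v *)
From mathcomp Require Import all_boot.
Set Implicit Arguments. Unset Strict Implicit. Unset Printing Implicit Defensive.

(* A simple graph: a finite vertex type V with a symmetric irreflexive
   adjacency relation e : rel V. *)

Section Skew.
Variables (V : finType) (e : rel V).

Definition skew_step (B B' : {set V}) : bool :=
  [exists u : V, exists v : V,
     ([set w | e u w & w \notin B] == [set v]) && (B' == v |: B)].

Definition skew_forcing (S : {set V}) : bool := connect skew_step S [set: V].

Definition min_skew_forcing (S : {set V}) : bool :=
  skew_forcing S && [forall T : {set V}, skew_forcing T ==> (#|S| <= #|T|)].

Definition MSF := {S : {set V} | min_skew_forcing S}.

Definition ZTE : rel MSF := fun S1 S2 =>
  [exists v1 : V, exists v2 : V,
     (val S1 :\: val S2 == [set v1]) && (val S2 :\: val S1 == [set v2])].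

Definition ZTS : rel MSF := fun S1 S2 =>
  [exists v1 : V, exists v2 : V,
     [&& val S1 :\: val S2 == [set v1], val S2 :\: val S1 == [set v2] & e v1 v2]].
End Skew.

Definition isomorphic (V1 V2 : finType) (e1 : rel V1) (e2 : rel V2) : Prop :=
  exists f : V1 -> V2, bijective f /\ forall x y, e1 x y = e2 (f x) (f y).

(* The cycle C_n on vertices 0..n-1 (simple for n >= 3). *)
Definition cycle_rel (n : nat) : rel 'I_n := fun i j =>
  (j == (i.+1 %% n) :> nat) || (i == (j.+1 %% n) :> nat).

Definition complete_rel (n : nat) : rel 'I_n := fun i j => i != j.

Definition cart_rel (V1 V2 : finType) (e1 : rel V1) (e2 : rel V2)
  : rel (V1 * V2)%type := fun x y =>
  ((x.1 == y.1) && e2 x.2 y.2) || ((x.2 == y.2) && e1 x.1 y.1).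

Definition edgeless_rel (m : nat) : rel 'I_m := fun _ _ => false.
Arguments cycle_rel n : clear implicits.
Arguments complete_rel n : clear implicits.
Arguments edgeless_rel m : clear implicits.
Arguments ZTE {V} e.
Arguments ZTS {V} e.
Arguments MSF {V} e.

(* Main.v *)
Require Import Defs.
From mathcomp Require Import all_boot zify.

Lemma modn_cases a n : a < n.*2 -> (a < n /\ a %% n = a) \/ (n <= a /\ a %% n = a - n).
Proof.
case: (ltnP a n) => h H; [left; split=>//; exact: modn_small | right; split=>//].
rewrite -{1}(subnK h) modnDr modn_small //; lia.
Qed.

Lemma step_inv n (hn : 2 < n) (B B' : {set 'I_n}) :
  skew_step (cycle_rel n) B B' -> exists v w : 'I_n,
  [/\ B' = v |: B, w \in B & (val v = (w + 2) %% n \/ val w = (v + 2) %% n)].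
Proof.
case/existsP => u /existsP [v /andP [/eqP H /eqP ->]].
have Hv : cycle_rel n u v && (v \notin B) by have := set11 v; rewrite -H inE.
have Hw : forall w, cycle_rel n u w -> w \notin B -> w = v.
  by move=> w c nb; apply/set1P; rewrite -H inE c nb.
have n0 : 0 < n by lia.
have un := ltn_ord u; have vn := ltn_ord v.
case/andP: Hv => /orP [/eqP hv | /eqP hu] _.
- pose w := Ordinal (ltn_pmod (u + n.-1) n0).
  have cw : cycle_rel n u w.
    apply/orP; right; apply/eqP => /=.
    rewrite -addn1 modnDml.
    have -> : u + n.-1 + 1 = u + n by lia.
    by rewrite modnDr modn_small.
  have wB : w \in B.
    apply/negPn/negP => nb; have := congr1 val (Hw w cw nb); rewrite /= hv.
    have [[h1 ->]|[h1 ->]] := modn_cases (u + n.-1) n ltac:(lia);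
    have [[h2 ->]|[h2 ->]] := modn_cases (u.+1) n ltac:(lia); lia.
  exists v, w; split => //; left; rewrite /= hv modnDml.
  have -> : u + n.-1 + 2 = u.+1 + n by lia.
  by rewrite modnDr.
- have E : forall x, (x %% n).+1 %% n = x.+1 %% n.
    by move=> x; rewrite -addn1 modnDml addn1.
  pose w := Ordinal (ltn_pmod u.+1 n0).
  have cw : cycle_rel n u w by apply/orP; left.
  have wB : w \in B.
    apply/negPn/negP => nb; have := congr1 val (Hw w cw nb); rewrite /= hu E => e.
    have [[h1 h2]|[h1 h2]] := modn_cases (v.+2) n ltac:(lia); move: e; rewrite h2; lia.
  exists v, w; split => //; right; rewrite /= hu E addn2 //.
Qed.

Lemma connect_inv (T : finType) (r : rel T) (P : pred T) x y :
  connect r x y -> (forall a b, P a -> r a b -> P b) -> P x -> P y.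
Proof.
case/connectP => p; elim: p x => [|z p IH] x /=; first by move=> _ -> .
by case/andP => rxz pz ly HP Px; apply: (IH z pz ly HP); apply: HP rxz.
Qed.

Definition orb n (n0 : 0 < n) (w : 'I_n) (i : nat) : 'I_n :=
  Ordinal (ltn_pmod (w + i.*2) n0).
Arguments orb {n}.

Lemma grow n (hn : 2 < n) (n0 : 0 < n) (B : {set 'I_n}) (w : 'I_n) : w \in B ->
  connect (skew_step (cycle_rel n)) B (orb n0 w 1 |: B).
Proof.
move=> wB.
case: (boolP (orb n0 w 1 \in B)) => h.
  by rewrite (setUidPr _) ?sub1set.
have E : forall x, (x %% n).+1 %% n = x.+1 %% n.
  by move=> x; rewrite -addn1 modnDml addn1.
have wn := ltn_ord w.
apply/connect1/existsP; exists (Ordinal (ltn_pmod (w + 1) n0)).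
apply/existsP; exists (orb n0 w 1); rewrite eqxx andbT; apply/eqP/setP => y.
have yn := ltn_ord y.
rewrite !inE; apply/idP/idP.
- case/andP => /orP [/eqP e | /eqP e] nb.
    by apply/eqP/val_inj; rewrite /= e E; congr (_ %% _); lia.
  exfalso; move: e nb => /= e.
  have -> : y = w.
    apply/val_inj => /=; move: e.
    have [[h1 ->]|[h1 ->]] := modn_cases (w + 1) n ltac:(lia);
    have [[h2 ->]|[h2 ->]] := modn_cases (y.+1) n ltac:(lia); lia.
  by rewrite wB.
- move/eqP => ->; rewrite h andbT; apply/orP; left; apply/eqP => /=.
  by rewrite E; congr (_ %% _); lia.
Qed.

Lemma orbit_reach n (hn : 2 < n) (n0 : 0 < n) (B : {set 'I_n}) (w : 'I_n) k : w \in B ->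
  exists B', [/\ connect (skew_step (cycle_rel n)) B B', B \subset B' &
                 forall i, i <= k -> orb n0 w i \in B'].
Proof.
move=> wB; elim: k => [|k [B' [c1 s1 h1]]].
  exists B; split => //; move=> i; rewrite leqn0 => /eqP ->.
  have -> : orb n0 w 0 = w by apply/val_inj; rewrite /= addn0 modn_small.
  done.
have e1 : orb n0 (orb n0 w k) 1 = orb n0 w k.+1.
  by apply/val_inj; rewrite /= modnDml doubleS -addnA addn2.
exists (orb n0 w k.+1 |: B'); split.
- apply: connect_trans c1 _; rewrite -e1; apply: grow => //; exact: h1.
- by apply: subset_trans s1 _; apply/subsetP => x xB; rewrite inE xB orbT.
- move=> i; rewrite leq_eqVlt => /orP [/eqP ->|]; first by rewrite setU11.
  by rewrite ltnS => ik; rewrite inE h1 ?orbT.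
Qed.

Lemma odd_force n (hn : 2 < n) (on : odd n) S : S != set0 ->
  skew_forcing (cycle_rel n) S.
Proof.
have n0 : 0 < n by lia.
case/set0Pn => w wS.
have [B' [c _ h]] := orbit_reach _ hn n0 _ _ n wS.
rewrite /skew_forcing; suff H : forall x, x \in B'.
  by have -> : [set: 'I_n] = B' by apply/setP => x; rewrite inE H.
move=> x.
have wn := ltn_ord w; have xn := ltn_ord x.
set i := ((x + n - w) * n.+1./2) %% n.
have -> : x = orb n0 w i.
  apply/val_inj; rewrite /= /i -muln2 -modnDmr modnMml modnDmr -mulnA.
  have -> : n.+1./2 * 2 = n.+1.
    by rewrite muln2 halfK /= on subn0.
  have -> : w + (x + n - w) * n.+1 = x + (x + n - w).+1 * n.
    rewrite mulnS mulSn; lia.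
  by rewrite addnC modnMDl modn_small.
by apply: h; rewrite /i; apply: ltnW; apply: ltn_pmod.
Qed.

Lemma even_cover n (n0 : 0 < n) (en : ~~ odd n) (w x : 'I_n) :
  odd x = odd w -> orb n0 w ((x + n - w)./2) = x.
Proof.
move=> oxw; have wn := ltn_ord w; have xn := ltn_ord x.
apply/val_inj => /=; rewrite halfK.
have -> : odd (x + n - w) = false.
  by rewrite oddB ?oddD ?oxw ?(negbTE en); [case: (odd w) | lia].
have -> : w + (x + n - w - 0) = x + n by lia.
by rewrite modnDr modn_small.
Qed.

Lemma even_force n (hn : 2 < n) (en : ~~ odd n) (S : {set 'I_n}) (a b : 'I_n) :
  a \in S -> b \in S -> ~~ odd a -> odd b -> skew_forcing (cycle_rel n) S.
Proof.
have n0 : 0 < n by lia.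
move=> aS bS oa ob.
have [B1 [c1 s1 h1]] := orbit_reach _ hn n0 _ _ n aS.
have bB1 : b \in B1 by apply: (subsetP s1).
have [B2 [c2 s2 h2]] := orbit_reach _ hn n0 _ _ n bB1.
rewrite /skew_forcing; suff H : forall x, x \in B2.
  have -> : [set: 'I_n] = B2 by apply/setP => x; rewrite inE H.
  by apply: connect_trans c1 c2.
move=> x.
have xn := ltn_ord x; have an := ltn_ord a; have bn := ltn_ord b.
case: (boolP (odd x)) => ox.
  rewrite -(@even_cover _ n0 en b x); last by rewrite ox ob.
  apply: h2; rewrite leq_half_double; lia.
apply: (subsetP s2).
rewrite -(@even_cover _ n0 en a x); last by rewrite (negbTE ox) (negbTE oa).
apply: h1; rewrite leq_half_double; lia.
Qed.

Lemma force_nonempty n (hn : 2 < n) (S : {set 'I_n}) :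
  skew_forcing (cycle_rel n) S -> S != set0.
Proof.
move=> F; apply/negP => /eqP S0.
have n0 : 0 < n by lia.
have H := @connect_inv _ _ (fun B : {set 'I_n} => B == set0) _ _ F.
have : [set: 'I_n] == set0.
  apply: H; last by rewrite /= S0.
  by move=> a b /eqP -> /(step_inv _ hn) [v [w [_ ]]]; rewrite inE.
by apply/negP/set0Pn; exists (Ordinal n0).
Qed.

Lemma odd_step n (en : ~~ odd n) x : odd ((x + 2) %% n) = odd x.
Proof. by rewrite odd_mod ?oddD ?addbF // (negbTE en). Qed.

Lemma force_parity n (hn : 2 < n) (en : ~~ odd n) (S : {set 'I_n}) c :
  skew_forcing (cycle_rel n) S -> exists2 x : 'I_n, x \in S & odd x = c.
Proof.
move=> F.
case: (boolP [exists x in S, odd x == c]) => [/existsP [x /andP [xS /eqP xc]]|H].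
  by exists x.
exfalso.
have PS : [forall x, (x \in S) ==> (odd x == ~~ c)].
  apply/forallP => x; apply/implyP => xS.
  case: (boolP (odd x == c)) => [xc|]; last by case: c {H}; case: (odd x).
  by move: H; rewrite negb_exists => /forallP /(_ x); rewrite xS xc.
pose P := fun B : {set 'I_n} => [forall x, (x \in B) ==> (odd x == ~~ c)].
have H2 := @connect_inv _ _ P _ _ F; move: H2.
have PT : ~ P [set: 'I_n].
  have c1 : (c : nat) < n by move: (leq_b1 c); lia.
  move=> /forallP /(_ (Ordinal c1)); rewrite inE /=; clear; by case: c.
move=> H2; apply: PT; apply: H2 => //.
move=> a b Pa /(step_inv _ hn) [v [w [-> wa hvw]]].
apply/forallP => x; apply/implyP; rewrite !inE => /orP [/eqP ->|xa]; last first.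
  by move/forallP: Pa => /(_ x); rewrite xa.
have := forallP Pa w; rewrite wa /= => /eqP <-.
by case: hvw => ->; rewrite odd_step.
Qed.

Lemma min_odd n (hn : 2 < n) (on : odd n) (S : {set 'I_n}) :
  min_skew_forcing (cycle_rel n) S = (#|S| == 1).
Proof.
have n0 : 0 < n by lia.
apply/andP/idP.
- case=> F /forallP /(_ [set Ordinal n0]).
  rewrite odd_force //; last by apply/set0Pn; exists (Ordinal n0); rewrite inE.
  rewrite cards1 /= => le1.
  have : 0 < #|S| by rewrite card_gt0 force_nonempty.
  by rewrite eqn_leq le1.
- move/eqP => S1; split.
    by apply: odd_force => //; rewrite -card_gt0 S1.
  apply/forallP => T; apply/implyP => FT; rewrite S1 card_gt0.
  exact: force_nonempty FT.
Qed.

Lemma min_even n (hn : 2 < n) (en : ~~ odd n) (S : {set 'I_n}) :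
  min_skew_forcing (cycle_rel n) S <->
  exists a b : 'I_n, [/\ ~~ odd a, odd b & S = [set a; b]].
Proof.
have n0 : 0 < n by lia.
have n1 : 1 < n by lia.
have two : forall T : {set 'I_n}, skew_forcing (cycle_rel n) T -> 2 <= #|T|.
  move=> T FT.
  have [a aT oa] := force_parity _ hn en _ false FT.
  have [b bT ob] := force_parity _ hn en _ true FT.
  have ab : a != b by apply/eqP => e; move: oa; rewrite e ob.
  have := subset_leq_card (_ : [set a; b] \subset T).
  rewrite cards2 ab; apply.
  by apply/subsetP => x; rewrite !inE => /orP [] /eqP ->.
split.
- case/andP => F /forallP /(_ [set Ordinal n0; Ordinal n1]).
  rewrite (@even_force _ hn en _ (Ordinal n0) (Ordinal n1)) ?inE ?eqxx ?orbT //=.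
  rewrite cards2 /= => le2.
  have [a aS oa] := force_parity _ hn en _ false F.
  have [b bS ob] := force_parity _ hn en _ true F.
  exists a, b; split; rewrite ?oa //.
  have ab : a != b by apply/eqP => e; move: oa; rewrite e ob.
  apply/eqP; rewrite eq_sym eqEcard cards2 ab le2 andbT.
  by apply/subsetP => x; rewrite !inE => /orP [] /eqP ->.
- case=> a [b [oa ob ->]].
  have ab : a != b by apply/eqP => e; move: oa; rewrite e ob.
  apply/andP; split.
    by apply: (@even_force _ hn en _ a b); rewrite ?inE ?eqxx ?orbT.
  apply/forallP => T; apply/implyP => FT; rewrite cards2 ab.
  exact: two.
Qed.

Lemma set1_neq0' (T : finType) (v : T) : (set0 == [set v]) = false.
Proof. by apply/negbTE/eqP => h; have := set11 v; rewrite -h inE. Qed.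

Lemma setD_single (T : finType) (A B : {set T}) (c : T) :
  c \in A -> c \notin B -> (forall x, x \in A -> x \notin B -> x = c) ->
  A :\: B = [set c].
Proof.
move=> cA cB H; apply/setP => x; rewrite !inE.
case: (x =P c) => [->|xc]; first by rewrite cA cB.
by apply/negbTE/andP => [[xB xA]]; apply: xc; apply: H.
Qed.

Lemma setD1P (T : finType) (a b v1 v2 : T) :
  ([set a] :\: [set b] == [set v1]) && ([set b] :\: [set a] == [set v2])
  = [&& a != b, v1 == a & v2 == b].
Proof.
case: (a =P b) => [->|ab]; first by rewrite setDv set1_neq0'.
rewrite (@setD_single _ [set a] [set b] a); first last.
- by move=> x /set1P.
- by rewrite inE; apply/eqP.
- by rewrite inE.
rewrite (@setD_single _ [set b] [set a] b); first last.
- by move=> x /set1P.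
- by rewrite inE; apply/eqP => e; apply: ab.
- by rewrite inE.
by rewrite !(inj_eq set1_inj) /= (eq_sym a v1) (eq_sym b v2).
Qed.

Ltac neq := rewrite ?inE ?negb_or; repeat (apply/andP; split); first [ done | by rewrite eq_sym ].

Lemma setD2P (T : finType) (a b a' b' v1 v2 : T) :
  a != b -> a' != b' -> a != b' -> b != a' ->
  ([set a; b] :\: [set a'; b'] == [set v1]) && ([set a'; b'] :\: [set a; b] == [set v2])
  = ((a == a') && (b != b') && (v1 == b) && (v2 == b')) ||
    ((b == b') && (a != a') && (v1 == a) && (v2 == a')).
Proof.
move=> ab ab' ab'' ba'.
have notone : forall x y v : T, x != y -> ([set x; y] == [set v]) = false.
  move=> x y v xy; apply/negbTE/eqP => h.
  have := set21 x y; have := set22 x y; rewrite h !inE => /eqP e1 /eqP e2.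
  by rewrite e1 e2 eqxx in xy.
case: (a =P a') => [<-|/eqP na]; case: (b =P b') => [<-|/eqP nb].
- by rewrite setDv set1_neq0'.
- rewrite (@setD_single _ [set a; b] [set a; b'] b); first last.
  + by move=> x; rewrite !inE => /orP [] /eqP -> //; rewrite eqxx.
  + by neq.
  + by rewrite !inE eqxx orbT.
  rewrite (@setD_single _ [set a; b'] [set a; b] b'); first last.
  + by move=> x; rewrite !inE => /orP [] /eqP -> //; rewrite eqxx.
  + by neq.
  + by rewrite !inE eqxx orbT.
  by rewrite !(inj_eq set1_inj) ?eqxx /= ?nb (eq_sym b v1) (eq_sym b' v2) orbF.
- rewrite (@setD_single _ [set a; b] [set a'; b] a); first last.
  + by move=> x; rewrite !inE => /orP [] /eqP -> //; rewrite eqxx orbT.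
  + by neq.
  + by rewrite !inE eqxx.
  rewrite (@setD_single _ [set a'; b] [set a; b] a'); first last.
  + by move=> x; rewrite !inE => /orP [] /eqP -> //; rewrite eqxx orbT.
  + by neq.
  + by rewrite !inE eqxx.
  by rewrite !(inj_eq set1_inj) ?eqxx /= ?na (eq_sym a v1) (eq_sym a' v2).
- have -> : [set a; b] :\: [set a'; b'] = [set a; b].
    apply/setDidPl; rewrite disjoint_subset; apply/subsetP => x.
    by rewrite !inE => /orP [] /eqP ->; neq.
  by rewrite notone.
Qed.

Lemma iso_of (T1 T2 : finType) (e1 : rel T1) (e2 : rel T2) (g : T2 -> T1) (p0 : T2) :
  injective g -> (forall x, exists p, x = g p) ->
  (forall a b, e1 (g a) (g b) = e2 a b) -> isomorphic e1 e2.
Proof.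
move=> ginj gs ge.
pose f x := odflt p0 [pick p | g p == x].
have c1 : cancel f g.
  move=> x; rewrite /f; case: pickP => [p /eqP //|H].
  by have [p ep] := gs x; have := H p; rewrite ep eqxx.
have c2 : cancel g f by move=> p; apply: ginj; rewrite c1.
exists f; split; first exact: (Bijective c1 c2).
by move=> x y; rewrite -{1}(c1 x) -{1}(c1 y) ge.
Qed.

Lemma cyc_irr n (hn : 2 < n) (a : 'I_n) : cycle_rel n a a = false.
Proof.
rewrite /cycle_rel orbb; apply/negbTE/eqP => e.
have an := ltn_ord a.
move: e; have [[h1 ->]|[h1 ->]] := modn_cases a.+1 n ltac:(lia); lia.
Qed.

Lemma cyc_par n (en : ~~ odd n) (x y : 'I_n) : cycle_rel n x y -> odd x != odd y.
Proof.
case/orP => /eqP ->; rewrite odd_mod ?(negbTE en) //=; by case: (odd _).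
Qed.

Theorem theorem5p8 (n : nat) (hn : 3 <= n) :
  (odd n ->
     isomorphic (ZTE (cycle_rel n)) (complete_rel n) /\
     isomorphic (ZTS (cycle_rel n)) (cycle_rel n)) /\
  (~~ odd n ->
     isomorphic (ZTE (cycle_rel n))
                (cart_rel (complete_rel n./2) (complete_rel n./2)) /\
     isomorphic (ZTS (cycle_rel n)) (edgeless_rel (n ^ 2 %/ 4))).
Proof.
have n0 : 0 < n by lia.
split => [on | en].
- have mP : forall i : 'I_n, min_skew_forcing (cycle_rel n) [set i].
    by move=> i; rewrite min_odd // cards1.
  pose g := fun i : 'I_n => (exist _ [set i] (mP i) : MSF (cycle_rel n)).
  have ginj : injective g by move=> i j /(congr1 val) /set1_inj.
  have gsurj : forall x, exists p, x = g p.
    move=> [S HS]; have /cards1P [i Si] : #|S| == 1 by rewrite -min_odd.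
    by exists i; apply/val_inj.
  split.
  + apply: (@iso_of _ _ _ _ g (Ordinal n0) ginj gsurj) => a b.
    rewrite /ZTE /complete_rel /=; apply/existsP/idP.
    * by case=> v1 /existsP [v2]; rewrite setD1P => /andP [].
    * by move=> ab; exists a; apply/existsP; exists b; rewrite setD1P ab !eqxx.
  + apply: (@iso_of _ _ _ _ g (Ordinal n0) ginj gsurj) => a b.
    rewrite /ZTS /=; apply/existsP/idP.
    * case=> v1 /existsP [v2]; rewrite andbA setD1P.
      by case/andP => /and3P [_ /eqP -> /eqP ->].
    * move=> eab; exists a; apply/existsP; exists b.
      rewrite andbA setD1P !eqxx !andbT eab andbT.
      by apply/eqP => e; rewrite e cyc_irr in eab.
- have [k nk] : exists k, n = k.*2.
    by exists n./2; rewrite -{1}(odd_double_half n) (negbTE en) add0n.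
  subst n; rewrite doubleK.
  have -> : k.*2 ^ 2 %/ 4 = k * k.
    have -> : k.*2 ^ 2 = 4 * (k * k) by rewrite -mul2n; nia.
    by rewrite mulKn.
  have k0 : 0 < k by lia.
  have evP : forall i : 'I_k, i.*2 < k.*2 by move=> i; have := ltn_ord i; lia.
  have odP : forall i : 'I_k, i.*2.+1 < k.*2 by move=> i; have := ltn_ord i; lia.
  pose ev i := Ordinal (evP i); pose od i := Ordinal (odP i).
  have oev : forall i, odd (ev i) = false by move=> i; rewrite /= odd_double.
  have ood : forall i, odd (od i) = true by move=> i; rewrite /= odd_double.
  have evod : forall i j, ev i != od j.
    by move=> i j; apply/eqP => /(congr1 (fun x : 'I_k.*2 => odd x)); rewrite oev ood.
  have evinj : injective ev by move=> i j [] e; apply/val_inj => /=; lia.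
  have odinj : injective od by move=> i j [] e; apply/val_inj => /=; lia.
  have mP : forall p : 'I_k * 'I_k,
      min_skew_forcing (cycle_rel k.*2) [set ev p.1; od p.2].
    move=> p; apply/(min_even _ hn en); exists (ev p.1), (od p.2).
    by rewrite oev ood.
  pose g2 := fun p : 'I_k * 'I_k => (exist _ [set ev p.1; od p.2] (mP p) : MSF (cycle_rel k.*2)).
  have ginj : injective g2.
    move=> [i j] [i' j'] /(congr1 val) /= E.
    have := set21 (ev i) (od j); rewrite E !inE (negbTE (evod _ _)) orbF.
    move/eqP/evinj => ->.
    have := set22 (ev i) (od j); rewrite E !inE eq_sym (negbTE (evod _ _)) /=.
    by move/eqP/odinj => ->.
  have gsurj : forall x, exists p, x = g2 p.
    move=> [S HS]; have := HS; move/(min_even _ hn en) => [a [b [oa ob Sab]]].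
    have ak : a./2 < k by rewrite ltn_half_double.
    have bk : b./2 < k by rewrite ltn_half_double.
    exists (Ordinal ak, Ordinal bk); apply/val_inj => /=; rewrite Sab.
    congr [set _; _]; apply/val_inj => /=.
      by rewrite -{1}(odd_double_half a) (negbTE oa).
    by rewrite -{1}(odd_double_half b) ob.
  have p0 : 'I_k * 'I_k := (Ordinal k0, Ordinal k0).
  split.
  + apply: (@iso_of _ _ _ _ g2 p0 ginj gsurj) => [[i j] [i' j']].
    rewrite /ZTE /cart_rel /complete_rel /=.
    have H : forall v1 v2,
      ([set ev i; od j] :\: [set ev i'; od j'] == [set v1]) &&
      ([set ev i'; od j'] :\: [set ev i; od j] == [set v2]) =
      ((ev i == ev i') && (od j != od j') && (v1 == od j) && (v2 == od j')) ||
      ((od j == od j') && (ev i != ev i') && (v1 == ev i) && (v2 == ev i')).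
      by move=> v1 v2; rewrite setD2P // eq_sym.
    apply/existsP/idP.
    * case=> v1 /existsP [v2]; rewrite H (inj_eq evinj) (inj_eq odinj).
      by case/orP => /andP [/andP [/andP [-> ->] _] _]; rewrite ?orbT.
    * case/orP => /andP [h1 h2].
        exists (od j); apply/existsP; exists (od j').
        by rewrite H (inj_eq evinj) (inj_eq odinj) h1 h2 !eqxx.
      exists (ev i); apply/existsP; exists (ev i').
      by rewrite H (inj_eq evinj) (inj_eq odinj) h1 h2 !eqxx orbT.
  + have cardP : #|{: 'I_k * 'I_k}| = k * k by rewrite card_prod !card_ord.
    pose h := fun i : 'I_(k * k) => enum_val (cast_ord (esym cardP) i).
    have kk0 : 0 < k * k by rewrite muln_gt0 k0.
    apply: (@iso_of _ _ _ _ (fun i => g2 (h i)) (Ordinal kk0)).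
    * by move=> i j /ginj /enum_val_inj /cast_ord_inj.
    * move=> x; have [p ->] := gsurj x.
      by exists (cast_ord cardP (enum_rank p)); rewrite /h cast_ordK enum_rankK.
    * move=> i j; rewrite /edgeless_rel; move: (h i) (h j) => [a b] [a' b'].
      apply/negbTE/existsP => [[v1 /existsP [v2]]].
      have H :
        ([set ev a; od b] :\: [set ev a'; od b'] == [set v1]) &&
        ([set ev a'; od b'] :\: [set ev a; od b] == [set v2]) =
        ((ev a == ev a') && (od b != od b') && (v1 == od b) && (v2 == od b')) ||
        ((od b == od b') && (ev a != ev a') && (v1 == ev a) && (v2 == ev a')).
        by rewrite setD2P // eq_sym.
      rewrite [X in is_true X]andbA [X in is_true (X && _)]H.
      case/andP => /orP [] /andP [/andP [_ /eqP ->] /eqP ->] /(cyc_par _ en);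
        by rewrite ?oev ?ood.
Qed.
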